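(* Consider the PSSG described in the context in the FULL-FULL scenario: $k_1\mu_1>2L\lambda$ and $k_2\mu_2>2L\lambda$. Define $$\theta^L_1=-\frac{k_q(q_1(L+x_2)-q_2(L-x_2))+k_l(x_2-x_1)}{k_p d},\quad \theta^R_1=\frac{k_q(q_2(L-x_1)-q_1(x_1+L))+k_l(x_2-x_1)}{k_p d},$$ $$\theta^L_2=-\frac{k_q q_1(2L)+k_l(x_2-x_1)}{k_p d},\quad \theta^R_2=\frac{k_q q_2(2L)+k_l(x_2-x_1)}{k_p d}.$$ (1) If $p_1-p_2\in[\theta^R_1,\theta^R_2)$, then the Nash equilibrium of the PSSG is: every PEV at $x\in[x_1,L]$ selects station 2 with probability 1, and every PEV at $x\in[-L,x_1)$ selects station 1 with probability $\omega_1$ and station 2 with probability $1-\omega_1$, where $\omega_1$ is the unique root in $[0,1]$ of $$k_q\Big(q_1\big((x_1+L)\omega_1\big)-q_2\big(L-x_1+(x_1+L)(1-\omega_1)\big)\Big)+k_pd(p_1-p_2)+k_l(x_1-x_2)=0.$$ (2) If $p_1-p_2\in(\theta^L_2,\theta^L_1]$, then the Nash equilibrium of the PSSG is: every PEV at $x\in[-L,x_2]$ selects station 1 with probability 1, and every PEV at $x\in(x_2,L]$ selects station 1 with probability $\omega_1$ and station 2 with probability $1-\omega_1$, where $\omega_1$ is the unique root in $[0,1]$ of $$k_q\Big(q_2\big((L-x_2)(1-\omega_1)\big)-q_1\big(x_2+L+(L-x_2)\omega_1\big)\Big)+k_pd(p_2-p_1)+k_l(x_1-x_2)=0.$$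
   Context: The system is the segment $[-L,L]$ ($L>0$) with two charging stations located at $x_1<x_2$, $-L<x_1<x_2<L$. Station $i\in\{1,2\}$ has $k_i\ge 1$ (integer) identical charging ports, PEV service times with mean $1/\mu_i$ ($\mu_i>0$) and variance $\sigma_i^2$, and announces a price $p_i\in[p_{\min},p_{\max}]$. A continuum of PEVs is uniformly distributed on $[-L,L]$, generating charging requests at rate $\lambda>0$ per unit length. Each PEV at location $x$ selects station 1 or 2, possibly at random; a strategy profile is described by the probability $\omega(x)\in[0,1]$ that the PEV at $x$ selects station 1. Let $a_1=\int_{-L}^{L}\omega(x)\,dx$ and $a_2=2L-a_1$. For $0\le a<k_i\mu_i/\lambda$, $$q_i(a)=\frac{a\lambda\,(\sigma_i^2+\frac{1}{\mu_i^2})\,\rho^{k_i-1}}{2(k_i-1)!\,(k_i-\rho)^2\Big[\sum_{m=0}^{k_i-1}\frac{\rho^m}{m!}+\frac{\rho^{k_i}}{(k_i-1)!(k_i-\rho)}\Big]},\qquad \rho=\frac{a\lambda}{\mu_i},$$ is the mean waiting time at station $i$, and $q_i(a)=+\infty$ if $a\ge k_i\mu_i/\lambda$. Given $a_1,a_2$ (which a single PEV cannot change), a PEV at $x$ selecting station $i$ gets payoff $U(i;x)=-k_l|x-x_i|-k_q\,q_i(a_i)-k_p\,d\,p_i$, with constants $k_l,k_q,k_p,d>0$; a randomized choice yields the expected payoff. A Nash equilibrium of the PSSG is a profile in which every PEV's (possibly mixed) choice maximizes its expected payoff given $a_1,a_2$. *)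

(* Defs.v *)
From Stdlib Require Import Reals Lra.
From Coquelicot Require Import Coquelicot.
Open Scope R_scope.

Record PSSG := mkPSSG {
  L : R; x1 : R; x2 : R;
  k1 : nat; k2 : nat;          (* number of charging ports *)
  mu1 : R; mu2 : R;            (* service rates: mean service time 1/mu_i *)
  sig1 : R; sig2 : R;          (* service-time standard deviations (variance sig_i^2) *)
  p1 : R; p2 : R; pmin : R; pmax : R;
  lam : R;                     (* request rate per unit length *)
  kl : R; kq : R; kp : R; d : R }.

Definition valid (G : PSSG) : Prop :=
  0 < L G /\ - L G < x1 G /\ x1 G < x2 G /\ x2 G < L G /\
  (1 <= k1 G)%nat /\ (1 <= k2 G)%nat /\ 0 < mu1 G /\ 0 < mu2 G /\
  pmin G <= p1 G <= pmax G /\ pmin G <= p2 G <= pmax G /\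
  0 < lam G /\ 0 < kl G /\ 0 < kq G /\ 0 < kp G /\ 0 < d G.

(** The (finite) mean-waiting-time formula, meaningful for 0 <= a < k mu / lam. *)
Definition qfin (k : nat) (mu sig lam a : R) : R :=
  let rho := a * lam / mu in
  a * lam * (sig ^ 2 + 1 / mu ^ 2) * rho ^ (k - 1) /
  (2 * INR (Factorial.fact (k - 1)) * (INR k - rho) ^ 2 *
   (sum_f_R0 (fun m => rho ^ m / INR (Factorial.fact m)) (k - 1) +
    rho ^ k / (INR (Factorial.fact (k - 1)) * (INR k - rho)))).

Definition qwait (k : nat) (mu sig lam a : R) : Rbar :=
  if Rlt_dec a (INR k * mu / lam) then Finite (qfin k mu sig lam a) else p_infty.

Definition q1 (G : PSSG) (a : R) : R := qfin (k1 G) (mu1 G) (sig1 G) (lam G) a.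
Definition q2 (G : PSSG) (a : R) : R := qfin (k2 G) (mu2 G) (sig2 G) (lam G) a.

Definition payoff (G : PSSG) (xi pi : R) (qi : Rbar) (x : R) : Rbar :=
  match qi with
  | Finite v => Finite (- kl G * Rabs (x - xi) - kq G * v - kp G * d G * pi)
  | p_infty => m_infty
  | m_infty => p_infty
  end.

Definition U1 (G : PSSG) (x a1 : R) : Rbar :=
  payoff G (x1 G) (p1 G) (qwait (k1 G) (mu1 G) (sig1 G) (lam G) a1) x.
Definition U2 (G : PSSG) (x a2 : R) : Rbar :=
  payoff G (x2 G) (p2 G) (qwait (k2 G) (mu2 G) (sig2 G) (lam G) a2) x.

(** Expected payoff of choosing station 1 with probability w (0 * (-oo) = 0). *)
Definition EU (G : PSSG) (w x a1 a2 : R) : Rbar :=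
  if Req_EM_T w 0 then U2 G x a2
  else if Req_EM_T w 1 then U1 G x a1
  else Rbar_plus (Rbar_mult w (U1 G x a1)) (Rbar_mult (1 - w) (U2 G x a2)).

Definition NashEq (G : PSSG) (omega : R -> R) : Prop :=
  (forall x, - L G <= x <= L G -> 0 <= omega x <= 1) /\
  ex_RInt omega (- L G) (L G) /\
  let a1 := RInt omega (- L G) (L G) in
  let a2 := 2 * L G - a1 in
  forall x, - L G <= x <= L G ->
  forall w, 0 <= w <= 1 -> Rbar_le (EU G w x a1 a2) (EU G (omega x) x a1 a2).

Definition full_full (G : PSSG) : Prop :=
  INR (k1 G) * mu1 G > 2 * L G * lam G /\ INR (k2 G) * mu2 G > 2 * L G * lam G.

Definition thetaL1 (G : PSSG) : R :=
  - (kq G * (q1 G (L G + x2 G) - q2 G (L G - x2 G)) + kl G * (x2 G - x1 G)) / (kp G * d G).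
Definition thetaR1 (G : PSSG) : R :=
  (kq G * (q2 G (L G - x1 G) - q1 G (x1 G + L G)) + kl G * (x2 G - x1 G)) / (kp G * d G).
Definition thetaL2 (G : PSSG) : R :=
  - (kq G * q1 G (2 * L G) + kl G * (x2 G - x1 G)) / (kp G * d G).
Definition thetaR2 (G : PSSG) : R :=
  (kq G * q2 G (2 * L G) + kl G * (x2 G - x1 G)) / (kp G * d G).

Definition F1 (G : PSSG) (w : R) : R :=
  kq G * (q1 G ((x1 G + L G) * w) - q2 G (L G - x1 G + (x1 G + L G) * (1 - w)))
  + kp G * d G * (p1 G - p2 G) + kl G * (x1 G - x2 G).
Definition F2 (G : PSSG) (w : R) : R :=
  kq G * (q2 G ((L G - x2 G) * (1 - w)) - q1 G (x2 G + L G + (L G - x2 G) * w))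
  + kp G * d G * (p2 G - p1 G) + kl G * (x1 G - x2 G).

Definition profile1 (G : PSSG) (w : R) : R -> R :=
  fun x => if Rlt_dec x (x1 G) then w else 0.
Definition profile2 (G : PSSG) (w : R) : R -> R :=
  fun x => if Rle_dec x (x2 G) then 1 else w.

(* Main.v *)
Require Import Defs.
From Stdlib Require Import Reals Lra Lia Psatz Ranalysis5.
From Coquelicot Require Import Coquelicot.
Open Scope R_scope.

Definition Sm (n:nat) (r:R) := sum_f_R0 (fun m => r^m / INR (Factorial.fact m)) n.

Lemma Sm_ge1 n r : 0 <= r -> 1 <= Sm n r.
Proof.
  intros Hr. induction n.
  - unfold Sm; simpl. lra.
  - change (Sm (S n) r) with (Sm n r + r^(S n) / INR (Factorial.fact (S n))).
    assert (0 <= r^(S n) / INR (Factorial.fact (S n))).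
    { apply Rdiv_le_0_compat. apply pow_le; lra. apply INR_fact_lt_0. }
    lra.
Qed.

Lemma Sm_derive n r : ex_derive (Sm n) r.
Proof.
  induction n.
  - apply ex_derive_ext with (fun r => 1). intros; unfold Sm; simpl; field.
    auto_derive; auto.
  - apply ex_derive_ext with (fun r => Sm n r + r^(S n) / INR (Factorial.fact (S n))).
    intros; reflexivity.
    auto_derive. repeat split; auto. all: apply INR_fact_neq_0.
Qed.

Lemma Sm_cmp n k r1 r2 : (n <= k)%nat -> 0 <= r1 <= r2 ->
  r1^k * Sm n r2 <= r2^k * Sm n r1.
Proof.
  intros Hn Hr. induction n.
  - unfold Sm; simpl. apply Rmult_le_compat_r. lra. apply pow_incr; lra.
  - change (Sm (S n) r2) with (Sm n r2 + r2^(S n) / INR (Factorial.fact (S n))).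
    change (Sm (S n) r1) with (Sm n r1 + r1^(S n) / INR (Factorial.fact (S n))).
    assert (IH := IHn ltac:(lia)).
    assert (r1^k * r2^(S n) <= r2^k * r1^(S n)).
    { replace k with (k - S n + S n)%nat by lia. rewrite !pow_add.
      assert (r1^(k - S n) <= r2^(k - S n)) by (apply pow_incr; lra).
      assert (0 <= r1^(S n)) by (apply pow_le; lra).
      assert (0 <= r2^(S n)) by (apply pow_le; lra).
      assert (0 <= r1^(k - S n)) by (apply pow_le; lra).
      set (a := r1^(k - S n)) in *. set (b := r2^(k - S n)) in *.
      set (c := r1^(S n)) in *. set (e := r2^(S n)) in *.
      assert (0 <= c*e) by (apply Rmult_le_pos; auto).
      nra. }
    assert (Hf := INR_fact_lt_0 (S n)).
    unfold Rdiv. rewrite !Rmult_plus_distr_l.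
    apply Rplus_le_compat. exact IH.
    assert (0 < / INR (Factorial.fact (S n))) by (apply Rinv_0_lt_compat; lra).
    nra.
Qed.

Lemma qfin_unf k mu sig lam : qfin k mu sig lam = fun a =>
  a * lam * (sig ^ 2 + 1 / mu ^ 2) * (a * lam / mu) ^ (k - 1) /
  (2 * INR (Factorial.fact (k - 1)) * (INR k - a * lam / mu) ^ 2 *
   (Sm (k-1) (a * lam / mu) +
    (a * lam / mu) ^ k / (INR (Factorial.fact (k - 1)) * (INR k - a * lam / mu)))).
Proof. reflexivity. Qed.

Lemma qfin_derive n mu sig lam a : 0 < mu -> 0 < lam -> 0 <= a * lam / mu < INR (S n) ->
  ex_derive (qfin (S n) mu sig lam) a.
Proof.
  intros Hmu Hlam Hr. rewrite qfin_unf. replace (S n - 1)%nat with n by lia.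
  remember (INR (S n)) as N.
  assert (Hf := INR_fact_lt_0 n).
  assert (HS := Sm_ge1 n (a * lam / mu) (proj1 Hr)).
  assert (0 <= (a*lam/mu)^(S n)) by (apply pow_le; lra).
  assert (0 <= (a*lam/mu)^(S n) / (INR (Factorial.fact n) * (N - a*lam/mu))).
  { apply Rdiv_le_0_compat; auto. apply Rmult_lt_0_compat; lra. }
  auto_derive. unfold Rdiv in *. simpl in *.
  repeat split.
  - apply Sm_derive.
  - apply Rmult_integral_contrapositive; split; lra.
  - assert (Hp : 2 * INR (Factorial.fact n) *
      ((N + - (a * lam * / mu)) * ((N + - (a * lam * / mu)) * 1)) *
   (Sm n (a * lam * / mu) +
   a * lam * / mu * (a * lam * / mu) ^ n *
   / (INR (Factorial.fact n) * (N + - (a * lam * / mu)))) <> 0).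
    { unfold Rminus in H0. apply Rgt_not_eq; unfold Rgt; repeat apply Rmult_lt_0_compat; lra. }
    exact Hp.
Qed.

Lemma qfin_eq n mu sig lam a : 0 < mu -> 0 < lam -> 0 <= a * lam / mu < INR (S n) ->
  qfin (S n) mu sig lam a =
  mu * (sig^2 + 1/mu^2) * (a*lam/mu)^(S n) /
  (2 * (INR (Factorial.fact n) * (INR (S n) - a*lam/mu)^2 * Sm n (a*lam/mu)
        + (a*lam/mu)^(S n) * (INR (S n) - a*lam/mu))).
Proof.
  intros Hmu Hlam Hr. rewrite qfin_unf. replace (S n - 1)%nat with n by lia.
  remember (INR (S n)) as N. set (r := a*lam/mu) in *.
  assert (Hf := INR_fact_lt_0 n).
  assert (HS := Sm_ge1 n r (proj1 Hr)).
  assert (0 <= r^(S n)) by (apply pow_le; lra).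
  assert (Har : a * lam = r * mu) by (unfold r; field; lra).
  rewrite Har. simpl pow.
  assert (0 < N - r) by lra.
  assert (0 <= r*r^n / (INR (Factorial.fact n) * (N - r))).
  { apply Rdiv_le_0_compat; auto. apply Rmult_lt_0_compat; lra. }
  assert (0 < INR (Factorial.fact n) * (N - r) ^ 2 * Sm n r + r * r ^ n * (N - r)).
  { simpl in H. assert (0 < INR (Factorial.fact n) * (N - r) ^ 2 * Sm n r).
    { repeat apply Rmult_lt_0_compat; try lra. }
    assert (0 <= r * r ^ n * (N - r)) by (apply Rmult_le_pos; lra). lra. }
  field. repeat split; try lra.
  assert (0 < Sm n r * (INR (Factorial.fact n) * (N - r))) by (apply Rmult_lt_0_compat; [lra|apply Rmult_lt_0_compat; lra]). simpl in H. lra.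
Qed.

Lemma qfin_lt n mu sig lam a b : 0 < mu -> 0 < lam -> 0 <= a -> a < b ->
  b * lam / mu < INR (S n) ->
  qfin (S n) mu sig lam a < qfin (S n) mu sig lam b.
Proof.
  intros Hmu Hlam Ha Hab Hb.
  assert (Hra : 0 <= a * lam / mu) by (apply Rdiv_le_0_compat; nra).
  assert (Hrab : a * lam / mu < b * lam / mu).
  { unfold Rdiv. apply Rmult_lt_compat_r. apply Rinv_0_lt_compat; lra. nra. }
  rewrite (qfin_eq n mu sig lam a), (qfin_eq n mu sig lam b); try lra.
  set (ra := a * lam / mu) in *. set (rb := b * lam / mu) in *.
  set (N := INR (S n)) in *.
  set (X := mu * (sig ^ 2 + 1 / mu ^ 2)).
  assert (HX : 0 < X).
  { unfold X. apply Rmult_lt_0_compat; auto.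
    assert (0 < 1/mu^2) by (apply Rdiv_lt_0_compat; [lra| apply pow_lt; lra]).
    assert (0 <= sig^2) by (apply pow2_ge_0). lra. }
  set (f := INR (Factorial.fact n)). assert (Hf : 0 < f) by apply INR_fact_lt_0.
  set (A := ra^(S n)). set (B := rb^(S n)).
  assert (HA : 0 <= A) by (apply pow_le; lra).
  assert (HB : 0 < B) by (apply pow_lt; lra).
  assert (HSa := Sm_ge1 n ra Hra).
  assert (HSb := Sm_ge1 n rb ltac:(lra)).
  assert (Hc : A * Sm n rb <= B * Sm n ra) by (apply Sm_cmp; lia || lra).
  set (Sa := Sm n ra) in *. set (Sb := Sm n rb) in *.
  assert (Hq : (N - rb)^2 < (N - ra)^2) by (simpl; nra).
  assert (Hq0 : 0 < (N - rb)^2) by (simpl; nra).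
  set (Da := f * (N - ra)^2 * Sa + A * (N - ra)).
  set (Db := f * (N - rb)^2 * Sb + B * (N - rb)).
  assert (HDa : 0 < Da) by (unfold Da; assert (0 <= A * (N-ra)) by (apply Rmult_le_pos; lra);
    assert (0 < f * (N - ra)^2 * Sa) by (repeat apply Rmult_lt_0_compat; lra); lra).
  assert (HDb : 0 < Db) by (unfold Db; assert (0 <= B * (N-rb)) by (apply Rmult_le_pos; lra);
    assert (0 < f * (N - rb)^2 * Sb) by (repeat apply Rmult_lt_0_compat; lra); lra).
  assert (Key : A * Db < B * Da).
  { unfold Da, Db.
    assert (f * (N-rb)^2 * (A * Sb) <= f * (N-rb)^2 * (B * Sa)).
    { apply Rmult_le_compat_l; [apply Rmult_le_pos; lra | exact Hc]. }
    assert (f * (N-rb)^2 * (B * Sa) < f * (N-ra)^2 * (B * Sa)).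
    { apply Rmult_lt_compat_r. nra. apply Rmult_lt_compat_l; lra. }
    assert (A * B * (N - rb) <= A * B * (N - ra)).
    { apply Rmult_le_compat_l; [nra|lra]. }
    nra. }
  apply (Rmult_lt_reg_r (2 * Da * (2 * Db))). nra.
  replace (X * A / (2 * Da) * (2 * Da * (2 * Db))) with (2 * X * (A * Db)) by (field; lra).
  replace (X * B / (2 * Db) * (2 * Da * (2 * Db))) with (2 * X * (B * Da)) by (field; lra).
  nra.
Qed.

Lemma qfin_0 k mu sig lam : qfin k mu sig lam 0 = 0.
Proof. unfold qfin. unfold Rdiv. rewrite !Rmult_0_l. reflexivity. Qed.

Lemma bnd_lt k mu lam L b : 0 < mu -> 0 < lam -> INR k * mu > 2 * L * lam -> b <= 2 * L ->
  b * lam / mu < INR k.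
Proof.
  intros Hmu Hlam Hk Hb. apply (Rmult_lt_reg_r mu); auto.
  replace (b * lam / mu * mu) with (b * lam) by (field; lra). nra.
Qed.

Lemma qL_lt k mu sig lam L a b : (1 <= k)%nat -> 0 < mu -> 0 < lam ->
  INR k * mu > 2 * L * lam -> 0 <= a -> a < b -> b <= 2 * L ->
  qfin k mu sig lam a < qfin k mu sig lam b.
Proof.
  intros Hk Hmu Hlam HF Ha Hab Hb. destruct k as [|n]; [lia|].
  apply qfin_lt; auto. eapply bnd_lt; eauto.
Qed.

Lemma qL_der k mu sig lam L a : (1 <= k)%nat -> 0 < mu -> 0 < lam ->
  INR k * mu > 2 * L * lam -> 0 <= a -> a <= 2 * L ->
  ex_derive (qfin k mu sig lam) a.
Proof.
  intros Hk Hmu Hlam HF Ha Hb. destruct k as [|n]; [lia|].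
  apply qfin_derive; auto. split. apply Rdiv_le_0_compat; nra. eapply bnd_lt; eauto.
Qed.

Lemma qL_wait k mu sig lam L a : 0 < mu -> 0 < lam ->
  INR k * mu > 2 * L * lam -> a <= 2 * L ->
  qwait k mu sig lam a = Finite (qfin k mu sig lam a).
Proof.
  intros Hmu Hlam HF Hb. unfold qwait. destruct (Rlt_dec a (INR k * mu / lam)) as [_|Hn]; auto.
  exfalso; apply Hn. apply (Rmult_lt_reg_r lam); auto.
  replace (INR k * mu / lam * lam) with (INR k * mu) by (field; lra). nra.
Qed.

Lemma EU_fin G w x a1 a2 v1 v2 :
  qwait (k1 G) (mu1 G) (sig1 G) (lam G) a1 = Finite v1 ->
  qwait (k2 G) (mu2 G) (sig2 G) (lam G) a2 = Finite v2 ->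
  EU G w x a1 a2 = Finite (w * (- kl G * Rabs (x - x1 G) - kq G * v1 - kp G * d G * p1 G)
     + (1 - w) * (- kl G * Rabs (x - x2 G) - kq G * v2 - kp G * d G * p2 G)).
Proof.
  intros H1 H2. unfold EU, U1, U2. rewrite H1, H2. simpl.
  destruct (Req_EM_T w 0) as [->|_]. f_equal; ring.
  destruct (Req_EM_T w 1) as [->|_]. f_equal; ring.
  simpl. reflexivity.
Qed.

Lemma int_step (f : R -> R) a c b u v : a < c -> c < b ->
  (forall x, a < x < c -> f x = u) -> (forall x, c < x < b -> f x = v) ->
  is_RInt f a b ((c - a) * u + (b - c) * v).
Proof.
  intros Hac Hcb H1 H2.
  assert (P1 : is_RInt f a c (scal (c - a) u)).
  { apply is_RInt_ext with (fun _ => u). 2: exact (@is_RInt_const R_NormedModule a c u).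
    intros x Hx. rewrite Rmin_left, Rmax_right in Hx by lra. symmetry; apply H1; lra. }
  assert (P2 : is_RInt f c b (scal (b - c) v)).
  { apply is_RInt_ext with (fun _ => v). 2: exact (@is_RInt_const R_NormedModule c b v).
    intros x Hx. rewrite Rmin_left, Rmax_right in Hx by lra. symmetry; apply H2; lra. }
  exact (is_RInt_Chasles f a c b _ _ P1 P2).
Qed.

Lemma q1_0 G : q1 G 0 = 0. Proof. apply qfin_0. Qed.
Lemma q2_0 G : q2 G 0 = 0. Proof. apply qfin_0. Qed.

Lemma abs_tri x a b : a < b -> Rabs (x - b) <= Rabs (x - a) + (b - a).
Proof. intros. unfold Rabs; destruct (Rcase_abs (x - b)); destruct (Rcase_abs (x - a)); lra. Qed.

Theorem theorem2 (G : PSSG) :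
  valid G -> full_full G ->
  (thetaR1 G <= p1 G - p2 G < thetaR2 G ->
     (exists! w, 0 <= w <= 1 /\ F1 G w = 0) /\
     (forall w, 0 <= w <= 1 -> F1 G w = 0 -> NashEq G (profile1 G w))) /\
  (thetaL2 G < p1 G - p2 G <= thetaL1 G ->
     (exists! w, 0 <= w <= 1 /\ F2 G w = 0) /\
     (forall w, 0 <= w <= 1 -> F2 G w = 0 -> NashEq G (profile2 G w))).
Proof.
  intros HV [HF1 HF2].
  destruct HV as (HL & Hx1 & H12 & Hx2 & Hk1 & Hk2 & Hmu1 & Hmu2 & Hp1 & Hp2 & Hlam & Hkl & Hkq & Hkp & Hd).
  assert (Q1lt : forall a b, 0 <= a -> a < b -> b <= 2 * L G -> q1 G a < q1 G b)
    by (intros; eapply qL_lt; eauto).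
  assert (Q2lt : forall a b, 0 <= a -> a < b -> b <= 2 * L G -> q2 G a < q2 G b)
    by (intros; eapply qL_lt; eauto).
  assert (Q1d : forall a, 0 <= a -> a <= 2 * L G -> ex_derive (q1 G) a)
    by (intros; eapply qL_der; eauto).
  assert (Q2d : forall a, 0 <= a -> a <= 2 * L G -> ex_derive (q2 G) a)
    by (intros; eapply qL_der; eauto).
  assert (W1 : forall a, a <= 2 * L G -> qwait (k1 G) (mu1 G) (sig1 G) (lam G) a = Finite (q1 G a))
    by (intros; eapply qL_wait; eauto).
  assert (W2 : forall a, a <= 2 * L G -> qwait (k2 G) (mu2 G) (sig2 G) (lam G) a = Finite (q2 G a))
    by (intros; eapply qL_wait; eauto).
  assert (Hkpd : 0 < kp G * d G) by nra.
  split.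
  - intros [Th1 Th2].
    assert (Fmono : forall u v, 0 <= u -> u < v -> v <= 1 -> F1 G u < F1 G v).
    { intros u v Hu Huv Hv. unfold F1.
      assert (q1 G ((x1 G + L G) * u) < q1 G ((x1 G + L G) * v)) by (apply Q1lt; nra).
      assert (q2 G (L G - x1 G + (x1 G + L G) * (1 - v)) < q2 G (L G - x1 G + (x1 G + L G) * (1 - u)))
        by (apply Q2lt; nra).
      nra. }
    assert (F0 : F1 G 0 < 0).
    { unfold thetaR2 in Th2. apply (Rmult_lt_compat_l (kp G * d G)) in Th2; auto.
      replace (kp G * d G * ((kq G * q2 G (2 * L G) + kl G * (x2 G - x1 G)) / (kp G * d G)))
        with (kq G * q2 G (2 * L G) + kl G * (x2 G - x1 G)) in Th2 by (field; lra).
      unfold F1. replace ((x1 G + L G) * 0) with 0 by ring. rewrite q1_0.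
      replace (L G - x1 G + (x1 G + L G) * (1 - 0)) with (2 * L G) by ring. lra. }
    assert (Fone : 0 <= F1 G 1).
    { unfold thetaR1 in Th1. apply (Rmult_le_compat_l (kp G * d G)) in Th1; [|lra].
      replace (kp G * d G * ((kq G * (q2 G (L G - x1 G) - q1 G (x1 G + L G)) + kl G * (x2 G - x1 G)) / (kp G * d G)))
        with (kq G * (q2 G (L G - x1 G) - q1 G (x1 G + L G)) + kl G * (x2 G - x1 G)) in Th1 by (field; lra).
      unfold F1. replace ((x1 G + L G) * 1) with (x1 G + L G) by ring.
      replace (L G - x1 G + (x1 G + L G) * (1 - 1)) with (L G - x1 G) by ring. lra. }
    split.
    + assert (Ex : exists w, 0 <= w <= 1 /\ F1 G w = 0).
      { destruct (Req_dec (F1 G 1) 0) as [E|E].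
        - exists 1; split; [lra|auto].
        - destruct (IVT_interv (F1 G) 0 1) as [z [Hz Hfz]]; try lra.
          intros a Ha. assert (Hd1 : ex_derive (F1 G) a).
          { unfold F1. auto_derive. split; [apply Q1d; nra|split; [apply Q2d; nra|exact I]]. }
          apply continuity_pt_filterlim. exact (ex_derive_continuous _ _ Hd1).
          exists z; auto. }
      destruct Ex as [w [Hw Hfw]]. exists w. split; [split; auto|].
      intros w' [Hw' Hfw']. destruct (Rtotal_order w w') as [Hlt|[Heq|Hgt]]; auto.
      * specialize (Fmono w w' ltac:(lra) Hlt ltac:(lra)). lra.
      * specialize (Fmono w' w ltac:(lra) Hgt ltac:(lra)). lra.
    + intros w [Hw0 Hw1] HFw.
      assert (HI : is_RInt (profile1 G w) (- L G) (L G) ((x1 G - - L G) * w + (L G - x1 G) * 0)).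
      { apply int_step; try lra; intros x Hx; unfold profile1;
        destruct (Rlt_dec x (x1 G)); lra. }
      split; [|split].
      { intros x Hx; unfold profile1; destruct (Rlt_dec x (x1 G)); lra. }
      { exists ((x1 G - - L G) * w + (L G - x1 G) * 0); exact HI. }
      rewrite (is_RInt_unique _ _ _ _ HI). cbv zeta.
      set (a1 := (x1 G - - L G) * w + (L G - x1 G) * 0).
      assert (Ha1 : a1 <= 2 * L G) by (unfold a1; nra).
      assert (Ha2 : 2 * L G - a1 <= 2 * L G) by (unfold a1; nra).
      assert (E1 : q1 G a1 = q1 G ((x1 G + L G) * w)) by (f_equal; unfold a1; ring).
      assert (E2 : q2 G (2 * L G - a1) = q2 G (L G - x1 G + (x1 G + L G) * (1 - w)))
        by (f_equal; unfold a1; ring).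
      unfold F1 in HFw. rewrite <- E1, <- E2 in HFw.
      intros x Hx w' Hw'.
      rewrite (EU_fin G w' x a1 (2 * L G - a1) (q1 G a1) (q2 G (2 * L G - a1))) by auto.
      rewrite (EU_fin G (profile1 G w x) x a1 (2 * L G - a1) (q1 G a1) (q2 G (2 * L G - a1))) by auto.
      simpl.
      set (u1 := - kl G * Rabs (x - x1 G) - kq G * q1 G a1 - kp G * d G * p1 G).
      set (u2 := - kl G * Rabs (x - x2 G) - kq G * q2 G (2 * L G - a1) - kp G * d G * p2 G).
      assert (T := abs_tri x (x1 G) (x2 G) H12).
      assert (Hu : u1 <= u2).
      { unfold u1, u2. assert (kl G * Rabs (x - x2 G) <= kl G * (Rabs (x - x1 G) + (x2 G - x1 G)))
          by (apply Rmult_le_compat_l; lra). nra. }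
      unfold profile1. destruct (Rlt_dec x (x1 G)) as [Hlt|Hge].
      * assert (Hu' : u1 = u2).
        { unfold u1, u2. rewrite (Rabs_left (x - x1 G)) by lra.
          rewrite (Rabs_left (x - x2 G)) by lra. nra. }
        rewrite Hu'. lra.
      * nra.
  - intros [Th2 Th1].
    assert (Fmono : forall u v, 0 <= u -> u < v -> v <= 1 -> F2 G v < F2 G u).
    { intros u v Hu Huv Hv. unfold F2.
      assert (q1 G (x2 G + L G + (L G - x2 G) * u) < q1 G (x2 G + L G + (L G - x2 G) * v)) by (apply Q1lt; nra).
      assert (q2 G ((L G - x2 G) * (1 - v)) < q2 G ((L G - x2 G) * (1 - u)))
        by (apply Q2lt; nra).
      nra. }
    assert (Fone : F2 G 1 < 0).
    { unfold thetaL2 in Th2. apply (Rmult_lt_compat_l (kp G * d G)) in Th2; auto.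
      replace (kp G * d G * (- (kq G * q1 G (2 * L G) + kl G * (x2 G - x1 G)) / (kp G * d G)))
        with (- (kq G * q1 G (2 * L G) + kl G * (x2 G - x1 G))) in Th2 by (field; lra).
      unfold F2. replace ((L G - x2 G) * (1 - 1)) with 0 by ring. rewrite q2_0.
      replace (x2 G + L G + (L G - x2 G) * 1) with (2 * L G) by ring. lra. }
    assert (F0 : 0 <= F2 G 0).
    { unfold thetaL1 in Th1. apply (Rmult_le_compat_l (kp G * d G)) in Th1; [|lra].
      replace (kp G * d G * (- (kq G * (q1 G (L G + x2 G) - q2 G (L G - x2 G)) + kl G * (x2 G - x1 G)) / (kp G * d G)))
        with (- (kq G * (q1 G (L G + x2 G) - q2 G (L G - x2 G)) + kl G * (x2 G - x1 G))) in Th1 by (field; lra).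
      unfold F2. replace ((L G - x2 G) * (1 - 0)) with (L G - x2 G) by ring.
      replace (x2 G + L G + (L G - x2 G) * 0) with (L G + x2 G) by ring. lra. }
    split.
    + assert (Ex : exists w, 0 <= w <= 1 /\ F2 G w = 0).
      { destruct (Req_dec (F2 G 0) 0) as [E|E].
        - exists 0; split; [lra|auto].
        - destruct (IVT_interv (fun w => - F2 G w) 0 1) as [z [Hz Hfz]]; try lra.
          intros a Ha. assert (Hd1 : ex_derive (fun w => - F2 G w) a).
          { unfold F2. auto_derive. split; [apply Q2d; nra|split; [apply Q1d; nra|exact I]]. }
          apply continuity_pt_filterlim. exact (ex_derive_continuous _ _ Hd1).
          exists z; split; auto; lra. }
      destruct Ex as [w [Hw Hfw]]. exists w. split; [split; auto|].
      intros w' [Hw' Hfw']. destruct (Rtotal_order w w') as [Hlt|[Heq|Hgt]]; auto.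
      * specialize (Fmono w w' ltac:(lra) Hlt ltac:(lra)). lra.
      * specialize (Fmono w' w ltac:(lra) Hgt ltac:(lra)). lra.
    + intros w [Hw0 Hw1] HFw.
      assert (HI : is_RInt (profile2 G w) (- L G) (L G) ((x2 G - - L G) * 1 + (L G - x2 G) * w)).
      { apply int_step; try lra; intros x Hx; unfold profile2;
        destruct (Rle_dec x (x2 G)); lra. }
      split; [|split].
      { intros x Hx; unfold profile2; destruct (Rle_dec x (x2 G)); lra. }
      { exists ((x2 G - - L G) * 1 + (L G - x2 G) * w); exact HI. }
      rewrite (is_RInt_unique _ _ _ _ HI). cbv zeta.
      set (a1 := (x2 G - - L G) * 1 + (L G - x2 G) * w).
      assert (Ha1 : a1 <= 2 * L G) by (unfold a1; nra).
      assert (Ha2 : 2 * L G - a1 <= 2 * L G) by (unfold a1; nra).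
      assert (E1 : q1 G a1 = q1 G (x2 G + L G + (L G - x2 G) * w)) by (f_equal; unfold a1; ring).
      assert (E2 : q2 G (2 * L G - a1) = q2 G ((L G - x2 G) * (1 - w)))
        by (f_equal; unfold a1; ring).
      unfold F2 in HFw. rewrite <- E1, <- E2 in HFw.
      intros x Hx w' Hw'.
      rewrite (EU_fin G w' x a1 (2 * L G - a1) (q1 G a1) (q2 G (2 * L G - a1))) by auto.
      rewrite (EU_fin G (profile2 G w x) x a1 (2 * L G - a1) (q1 G a1) (q2 G (2 * L G - a1))) by auto.
      simpl.
      set (u1 := - kl G * Rabs (x - x1 G) - kq G * q1 G a1 - kp G * d G * p1 G).
      set (u2 := - kl G * Rabs (x - x2 G) - kq G * q2 G (2 * L G - a1) - kp G * d G * p2 G).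
      assert (T : Rabs (x - x1 G) <= Rabs (x - x2 G) + (x2 G - x1 G)).
      { unfold Rabs; destruct (Rcase_abs (x - x1 G)); destruct (Rcase_abs (x - x2 G)); lra. }
      assert (Hu : u2 <= u1).
      { unfold u1, u2. assert (kl G * Rabs (x - x1 G) <= kl G * (Rabs (x - x2 G) + (x2 G - x1 G)))
          by (apply Rmult_le_compat_l; lra). nra. }
      unfold profile2. destruct (Rle_dec x (x2 G)) as [Hle|Hgt].
      * nra.
      * assert (Hu' : u1 = u2).
        { unfold u1, u2. rewrite (Rabs_right (x - x1 G)) by lra.
          rewrite (Rabs_right (x - x2 G)) by lra. nra. }
        rewrite Hu'. lra.
Qed.
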